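(* Let $D$ be an integral domain and let $\mathcal{E}(D)$ be its essential prime spectrum. The following are equivalent: (i) $D$ is a PvMD; (ii) $D$ is an essential domain and there is a subset $Y\subseteq\operatorname{Spec}(D)$ such that $\{D_{\mathfrak p}:\mathfrak p\in Y\}$ is an essential representation of $D$ and $\operatorname{Cl}^c(Y)\subseteq\mathcal{E}(D)$.
   Context: All rings are commutative with identity. For an integral domain $D$ with quotient field $K$ and a nonzero fractional ideal $I$, set $(D:I)=\{x\in K: xI\subseteq D\}$, $I^v=(D:(D:I))$, and $I^t=\bigcup\{J^v: J\subseteq I,\ J \text{ finitely generated}\}$. An ideal $I$ is a $t$-ideal if $I=(0)$ or $I=I^t$; a $t$-prime is a prime $t$-ideal; a $t$-maximal ideal is a $t$-ideal maximal among proper $t$-ideals; $t\text{-Spec}(D)$ is the set of $t$-primes (including $(0)$). $D$ is a PvMD (Prüfer $v$-multiplication domain) if $D_{\mathfrak m}$ is a valuation domain for every $t$-maximal ideal $\mathfrak m$ of $D$. A valuation overring of $D$ is essential if it equals $D_{\mathfrak p}$ for some prime $\mathfrak p$ of $D$. An essential representation of $D$ is a family of essential valuation overrings of $D$ whose intersection is $D$; $D$ is essential if it has an essential representation. $\mathcal{E}(D)=\{\mathfrak p\in\operatorname{Spec}(D): D_{\mathfrak p}\text{ is a valuation domain}\}$. The constructible topology on $\operatorname{Spec}(A)$ is the coarsest topology in which every set $D(f)=\{\mathfrak p: f\notin\mathfrak p\}$, $f\in A$, is clopen; $\operatorname{Cl}^c(Y)$ denotes the closure of $Y\subseteq\operatorname{Spec}(A)$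 in this topology. *)

(* Defs.v *)
(* The integral domain D is R : idomainType, its quotient
   field K is {fraction R}; D is identified with its image under x |-> x%:F. *)
From HB Require Import structures.
From mathcomp Require Import all_boot all_order all_algebra.
From mathcomp Require Import fraction.
Set Implicit Arguments. Unset Strict Implicit. Unset Printing Implicit Defensive.
Import GRing.Theory.
Local Open Scope ring_scope.

Section Defs.
Variable R : idomainType.
Local Notation K := {fraction R}.
Local Notation "x %:F" := (@FracField.tofrac R x).

Definition is_ideal (I : R -> Prop) : Prop :=
  I 0 /\ (forall x y, I x -> I y -> I (x + y)) /\ (forall r x, I x -> I (r * x)).

Definition is_prime (P : R -> Prop) : Prop :=
  is_ideal P /\ ~ P 1 /\ (forall x y, P (x * y) -> P x \/ P y).

Definition dom : K -> Prop := fun x => exists a : R, x = a%:F.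
Definition frac_set (I : R -> Prop) : K -> Prop :=
  fun x => exists a, I a /\ x = a%:F.

Definition colon (A : K -> Prop) : K -> Prop :=
  fun x => forall y, A y -> dom (x * y).
Definition vclos (A : K -> Prop) : K -> Prop := colon (colon A).

Definition gen_ideal (s : seq R) : R -> Prop :=
  fun x => exists c : seq R, size c = size s /\
                             x = \sum_(i < size s) c`_i * s`_i.

Definition tclos (I : R -> Prop) : K -> Prop :=
  fun x => exists s : seq R, (forall a, gen_ideal s a -> I a) /\
                             vclos (frac_set (gen_ideal s)) x.

Definition t_ideal (I : R -> Prop) : Prop :=
  is_ideal I /\
  ((forall x, I x <-> x = 0) \/ (forall x, frac_set I x <-> tclos I x)).

Definition t_maximal (M : R -> Prop) : Prop :=
  t_ideal M /\ ~ M 1 /\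
  (forall J, t_ideal J -> ~ J 1 -> (forall x, M x -> J x) -> forall x, J x -> M x).

Definition loc (P : R -> Prop) : K -> Prop :=
  fun x => exists a s : R, ~ P s /\ x = a%:F / s%:F.

Definition is_valuation (V : K -> Prop) : Prop :=
  forall x : K, x != 0 -> V x \/ V x^-1.

Definition PvMD : Prop :=
  forall M, t_maximal M -> is_valuation (loc M).

Definition essential_valuation_overring (V : K -> Prop) : Prop :=
  is_valuation V /\ exists P, is_prime P /\ (forall x, V x <-> loc P x).

Definition essential_rep (F : (K -> Prop) -> Prop) : Prop :=
  (forall V, F V -> essential_valuation_overring V) /\
  (forall x, (forall V, F V -> V x) <-> dom x).

Definition essential_domain : Prop := exists F, essential_rep F.

Definition Espec (P : R -> Prop) : Prop := is_prime P /\ is_valuation (loc P).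

(** constructible topology on Spec(D): the topology generated by the sets
    D(f) and their complements (coarsest topology making every D(f) clopen);
    sets are taken as sets of predicates, intersected with Spec(D) below. *)
Definition Dset (f : R) : (R -> Prop) -> Prop := fun P => ~ P f.

Inductive c_open : ((R -> Prop) -> Prop) -> Prop :=
  | c_open_D f : c_open (Dset f)
  | c_open_V f : c_open (fun P => ~ Dset f P)
  | c_open_full : c_open (fun _ => True)
  | c_open_inter U W : c_open U -> c_open W -> c_open (fun P => U P /\ W P)
  | c_open_union (F : ((R -> Prop) -> Prop) -> Prop) :
      (forall U, F U -> c_open U) -> c_open (fun P => exists U, F U /\ U P).

Definition cl_c (Y : (R -> Prop) -> Prop) (P : R -> Prop) : Prop :=
  is_prime P /\ forall U, c_open U -> U P -> exists Q, Y Q /\ is_prime Q /\ U Q.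

End Defs.

(* Main.v *)
Require Import Defs.
From HB Require Import structures.
From mathcomp Require Import all_boot all_order all_algebra.
From mathcomp Require Import fraction.
From mathcomp Require Import boolp classical_sets filter.
From mathcomp Require Import ring.
Set Implicit Arguments. Unset Strict Implicit. Unset Printing Implicit Defensive.
Import GRing.Theory.
Local Open Scope ring_scope.

Section Aux.
Variable R : idomainType.
Local Notation K := {fraction R}.
Local Notation dm := (@dom R).
Local Notation "x %:F" := (@FracField.tofrac R x).

Lemma tofrac_inj (a b : R) : a%:F = b%:F -> a = b.
Proof. by move/eqP; rewrite tofrac_eq => /eqP. Qed.

Lemma dom0 : dm (0 : K). Proof. by exists 0; rewrite tofrac0. Qed.
Lemma dom1 : dm (1 : K). Proof. by exists 1; rewrite tofrac1. Qed.
Lemma domD (x y : K) : dm x -> dm y -> dm (x + y).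
Proof. by move=> [a ->] [b ->]; exists (a + b); rewrite tofracD. Qed.
Lemma domM (x y : K) : dm x -> dm y -> dm (x * y).
Proof. by move=> [a ->] [b ->]; exists (a * b); rewrite tofracM. Qed.
Lemma domF (a : R) : dm a%:F. Proof. by exists a. Qed.

Definition ksub (W : K -> Prop) :=
  W 0 /\ (forall x y, W x -> W y -> W (x + y)) /\ (forall r x, W x -> W (r%:F * x)).

Lemma gen_sub (W : K -> Prop) (s : seq R) : ksub W ->
  (forall r, r \in s -> W r%:F) -> forall a, gen_ideal s a -> W a%:F.
Proof.
move=> [W0 [WD WM]] Hs a [c [_ ->]].
rewrite rmorph_sum /=.
apply: (big_ind W) => // i _.
rewrite tofracM; apply: WM; apply: Hs; exact: mem_nth.
Qed.

Lemma gen_subR (N : R -> Prop) (s : seq R) : is_ideal N ->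
  (forall r, r \in s -> N r) -> forall a, gen_ideal s a -> N a.
Proof.
move=> [N0 [ND NM]] Hs a [c [_ ->]].
apply: (big_ind N) => // i _.
apply: NM; apply: Hs; exact: mem_nth.
Qed.

Lemma gen_mem (s : seq R) r : r \in s -> gen_ideal s r.
Proof.
move=> rs; have lt : (index r s < size s)%N by rewrite index_mem.
exists [seq (j == index r s)%:R | j <- iota 0 (size s)]; split.
  by rewrite size_map size_iota.
rewrite (bigD1 (Ordinal lt)) //= big1 ?addr0.
  by rewrite (nth_map 0%N) ?size_iota // nth_iota // add0n eqxx mul1r nth_index.
move=> j /eqP nj; rewrite (nth_map 0%N) ?size_iota // nth_iota // add0n.
case: eqP => [ej|]; last by rewrite mul0r.
by case: nj; apply: val_inj.
Qed.

Lemma gen_ideal_is (s : seq R) : is_ideal (gen_ideal s).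
Proof.
split; [|split].
- exists (nseq (size s) 0); rewrite size_nseq; split => //.
  by rewrite big1 // => i _; rewrite nth_nseq if_same mul0r.
- move=> x y [c [sc ->]] [d [sd ->]].
  exists [seq c`_i + d`_i | i <- iota 0 (size s)]; rewrite size_map size_iota; split => //.
  rewrite -big_split /=; apply: eq_bigr => i _.
  by rewrite (nth_map 0%N) ?size_iota // nth_iota // add0n mulrDl.
- move=> r x [c [sc ->]].
  exists [seq r * c`_i | i <- iota 0 (size s)]; rewrite size_map size_iota; split => //.
  rewrite mulr_sumr; apply: eq_bigr => i _.
  by rewrite (nth_map 0%N) ?size_iota // nth_iota // add0n mulrA.
Qed.

Lemma colon_anti (A B : K -> Prop) : (forall x, A x -> B x) ->
  forall y, colon B y -> colon A y.
Proof. by move=> AB y By z Az; apply: By; apply: AB. Qed.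

Lemma vclos_mono (A B : K -> Prop) : (forall x, A x -> B x) ->
  forall y, vclos A y -> vclos B y.
Proof. by move=> AB y Ay z Bz; apply: Ay; apply: colon_anti Bz. Qed.

Lemma vclos_ext (A : K -> Prop) x : A x -> vclos A x.
Proof. by move=> Ax y Cy; rewrite mulrC; apply: Cy. Qed.

Lemma vclos_idem (A B : K -> Prop) : (forall x, B x -> vclos A x) ->
  forall z, vclos B z -> vclos A z.
Proof.
move=> BA z Bz w Aw; apply: Bz => b Bb; rewrite mulrC; exact: BA.
Qed.

Lemma vclos_ksub (A : K -> Prop) : ksub (vclos A).
Proof.
split; [|split].
- by move=> y _; rewrite mul0r; exact: dom0.
- by move=> x y Ax Ay w Cw; rewrite mulrDl; apply: domD; [apply: Ax|apply: Ay].
- by move=> r x Ax w Cw; rewrite -mulrA; apply: domM; [exact: domF|apply: Ax].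
Qed.

Lemma dom_ksub : ksub dm.
Proof.
split; [exact: dom0|split; [exact: domD|]].
by move=> r x Dx; apply: domM => //; exact: domF.
Qed.

Lemma colon_gen (s : seq R) (u : K) : (forall r, r \in s -> dm (u * r%:F)) ->
  colon (frac_set (gen_ideal s)) u.
Proof.
move=> Hs y [a [ga ->]].
have : ksub (fun y => dm (u * y)).
  split; [by rewrite mulr0; exact: dom0|split].
  - by move=> x z dx dz; rewrite mulrDr; exact: domD.
  - by move=> r x dx; rewrite mulrCA; apply: domM => //; exact: domF.
by move=> W; exact: (gen_sub W Hs ga).
Qed.

Lemma colon_frac1 (I : R -> Prop) : colon (frac_set I) 1.
Proof. by move=> y [a [_ ->]]; rewrite mul1r; exact: domF. Qed.

Lemma vclos_frac_dom (I : R -> Prop) z : vclos (frac_set I) z -> dm z.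
Proof. by move=> /(_ 1 (@colon_frac1 I)); rewrite mulr1. Qed.

Lemma frac_tclos (I : R -> Prop) : is_ideal I -> forall x, frac_set I x -> tclos I x.
Proof.
move=> [I0 [ID IM]] x [a [Ia ->]]; exists [:: a]; split.
  by apply: gen_subR => [|r]; [split; [|split]|rewrite inE => /eqP ->].
by apply: vclos_ext; exists a; split => //; apply: gen_mem; rewrite inE.
Qed.


Definition tproper (N : R -> Prop) :=
  forall s, (forall a, gen_ideal s a -> N a) -> ~ vclos (frac_set (gen_ideal s)) 1.

Lemma gen1 : gen_ideal [:: (1 : R)] 1.
Proof. by apply: gen_mem; rewrite inE. Qed.

Lemma tproper_not1 N : is_ideal N -> tproper N -> ~ N 1.
Proof.
move=> IN TN N1; apply: (TN [:: 1]).
  by apply: gen_subR => // r; rewrite inE => /eqP ->.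
by apply: vclos_ext; exists 1; split => //; exact: gen1.
Qed.

Lemma frac_inj_set (I : R -> Prop) a : frac_set I a%:F -> I a.
Proof. by move=> [b [Ib /tofrac_inj ->]]. Qed.

Lemma tideal2_tproper J : (forall x, frac_set J x <-> tclos J x) -> ~ J 1 -> tproper J.
Proof.
move=> HJ J1 s sJ v1; apply: J1; apply: frac_inj_set; rewrite tofrac1.
by apply/HJ; exists s.
Qed.

Lemma colon_ideal_t (M : R -> Prop) (x : R) : is_ideal M ->
  (forall y, frac_set M y <-> tclos M y) -> t_ideal (fun d => M (d * x)).
Proof.
move=> IM HM.
have IN : is_ideal (fun d => M (d * x)).
  case: IM => [M0 [MD MM]]; split; [by rewrite mul0r|split].
  - by move=> a b Ma Mb; rewrite mulrDl; apply: MD.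
  - by move=> r a Ma; rewrite -mulrA; apply: MM.
split => //; right => y; split; first exact: frac_tclos.
move=> [s [sN vz]].
have [c ez] := vclos_frac_dom vz; subst y.
exists c; split => //.
set s' := [seq r * x | r <- s].
have s'M : forall a, gen_ideal s' a -> M a.
  apply: gen_subR => // b /mapP [r rs ->]; apply: sN; exact: gen_mem.
have : tclos M (c * x)%:F.
  exists s'; split => // w Cw; rewrite tofracM mulrAC -mulrA.
  apply: vz; apply: colon_gen => r rs.
  rewrite -mulrA -tofracM; apply: Cw; exists (x * r); split => //.
  by rewrite mulrC; apply: gen_mem; apply/mapP; exists r.
by move/HM/frac_inj_set.
Qed.

Lemma tmax_prime (M : R -> Prop) : t_maximal M -> is_prime M.
Proof.
move=> [[IM [Z|HM]] [M1 Mmax]].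
  split; [exact: IM|split; [exact: M1|]].
  move=> x y /Z /eqP; rewrite mulf_eq0 => /orP [/eqP->|/eqP->]; [left|right]; apply/Z => //.
split; [exact: IM|split; [exact: M1|]] => x y Mxy.
case: (pselect (M x)) => Mx; [by left|right].
apply: (Mmax (fun d => M (d * x))).
- exact: colon_ideal_t.
- by rewrite mul1r.
- by move=> a Ma; rewrite mulrC; case: IM => [_ [_ MM]]; apply: MM.
- by rewrite mulrC.
Qed.


Section ZornPart.
Variable H : R -> Prop.
Hypothesis IH : is_ideal H.
Hypothesis TH : tproper H.

Let good (N : R -> Prop) := is_ideal N /\ (forall x, H x -> N x) /\ tproper N.
Let PP (N : R -> Prop) := N = (fun _ => False) \/ good N.

Let PP_good N x : PP N -> N x -> good N.
Proof. by move=> [-> //|]. Qed.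

Let chain_ok (F : (R -> Prop) -> Prop) : (forall N, F N -> PP N) ->
  (forall N1 N2, F N1 -> F N2 -> (forall x, N1 x -> N2 x) \/ (forall x, N2 x -> N1 x)) ->
  PP (fun x => exists2 N, F N & N x).
Proof.
move=> FP Ftot.
case: (pselect (exists N0 x0, F N0 /\ N0 x0)); last first.
  move=> nex; left; apply: funext => x; apply: propext; split => // [[N FN Nx]].
  by apply: nex; exists N, x.
move=> [N0 [x0 [FN0 N0x0]]]; right.
have gN0 := PP_good (FP _ FN0) N0x0.
have big : forall l : seq R, (forall r, r \in l -> exists2 N, F N & N r) ->
    exists N, [/\ F N, (forall x, N0 x -> N x) & forall r, r \in l -> N r].
  elim => [|a l IHl] Hl; first by exists N0.
  have [|N [FN N0N Nl]] := IHl.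
    by move=> r rl; apply: Hl; rewrite inE rl orbT.
  have [N' FN' N'a] := Hl a (mem_head _ _).
  case: (Ftot _ _ FN FN') => sub.
  - exists N'; split => // [x /N0N/sub //|r]; rewrite inE => /orP [/eqP -> //|/Nl/sub //].
  - exists N; split => // r; rewrite inE => /orP [/eqP -> |/Nl //]; exact: sub.
split; [|split].
- split; [|split].
  + by exists N0 => //; case: gN0 => [[]].
  + move=> x y [N1 FN1 N1x] [N2 FN2 N2y].
    case: (Ftot _ _ FN1 FN2) => sub.
    * have [[_ [ND _]] _] := PP_good (FP _ FN2) N2y.
      by exists N2 => //; apply: ND => //; apply: sub.
    * have [[_ [ND _]] _] := PP_good (FP _ FN1) N1x.
      by exists N1 => //; apply: ND => //; apply: sub.
  + move=> r x [N FN Nx]; have [[_ [_ NM]] _] := PP_good (FP _ FN) Nx.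
    by exists N => //; apply: NM.
- by move=> x Hx; exists N0 => //; case: gN0 => [_ [/(_ x Hx)]].
- move=> s sU.
  have [|N [FN N0N sN]] := big s.
    by move=> r rs; apply: sU; apply: gen_mem.
  have [IN [_ TN]] := PP_good (FP _ FN) (N0N _ N0x0).
  by apply: TN; apply: gen_subR.
Qed.

Lemma tmax_exists : exists M, t_maximal M /\ forall x, H x -> M x.
Proof.
have [A [PA Amax]] := @Zorn_bigcup R PP chain_ok.
have maxs : forall B, PP B -> (forall x, A x -> B x) -> forall x, B x -> A x.
  move=> B PB AB; apply: contrapT => nBA; apply: (Amax B) => //; split => //.
have gA : good A.
  case: PA => // A0; exfalso; apply: (Amax H); last by right.
  rewrite A0; split => // sub; apply: (sub 0); by case: IH.
have [IA [HA TA]] := gA.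
have A1 := tproper_not1 IA TA.
exists A; split => //; split; [split => //; right|split => //].
  move=> y; split; first exact: frac_tclos.
  move=> [s [sA vz]]; have [c ez] := vclos_frac_dom vz; subst y.
  exists c; split => //.
  pose A' := fun d => exists a e, A a /\ d = a + e * c.
  apply: (maxs A'); last by exists 0, 1; rewrite mul1r add0r; split => //; case: IA.
  - right; split; [|split].
    + case: IA => [A0 [AD AM]]; split; [|split].
      * by exists 0, 0; rewrite mul0r addr0.
      * move=> x y [a [e [Aa ->]]] [b [f [Ab ->]]]; exists (a + b), (e + f); split.
          exact: AD.
        by rewrite mulrDl addrACA.
      * move=> r x [a [e [Aa ->]]]; exists (r * a), (r * e); split; first exact: AM.
        by rewrite mulrDr mulrA.
    + move=> x Hx; exists x, 0; rewrite mul0r addr0; split => //; exact: HA.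
    + move=> s' s'A' v1.
      have [l [lA lrep]] : exists l : seq R, (forall a, a \in l -> A a) /\
          forall r, r \in s' -> exists a e, a \in l /\ r = a + e * c.
        have : forall r, r \in s' -> A' r by move=> r rs; apply: s'A'; exact: gen_mem.
        elim: s' {s'A' v1} => [|r0 s0 IHs] Hs; first by exists [::].
        have [|l [lA lrep]] := IHs; first by move=> r rs; apply: Hs; rewrite inE rs orbT.
        have [a [e [Aa ea]]] := Hs r0 (mem_head _ _).
        exists (a :: l); split.
          by move=> b; rewrite inE => /orP [/eqP -> //|/lA].
        move=> r; rewrite inE => /orP [/eqP -> |/lrep [b [f [bl ->]]]].
          by exists a, e; rewrite mem_head.
        by exists b, f; rewrite inE bl orbT.
      apply: (TA (l ++ s)).
        apply: gen_subR => // r; rewrite mem_cat => /orP [/lA //|rs].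
        by apply: sA; apply: gen_mem.
      apply: vclos_idem v1 => y [d [gd ->]].
      apply: (gen_sub (vclos_ksub _)) gd => r /lrep [a [e [al ->]]].
      rewrite tofracD tofracM.
      have [K0 [KD KM]] := vclos_ksub (frac_set (gen_ideal (l ++ s))).
      apply: KD; first by apply: vclos_ext; exists a; split => //; apply: gen_mem; rewrite mem_cat al.
      apply: KM; apply: vclos_mono vz => y1 [b [gb ->]]; exists b; split => //.
      apply: (gen_subR (gen_ideal_is _)) gb => r1 r1s; apply: gen_mem; rewrite mem_cat r1s orbT //.
  - by move=> x Ax; exists x, 0; rewrite mul0r addr0.
move=> J [IJ [Z|HJ]] J1 AJ x Jx.
  by move/Z: Jx => ->; case: IA.
apply: (maxs J) => //; right; split => //; split; last exact: tideal2_tproper.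
by move=> y /HA /AJ.
Qed.

End ZornPart.


Lemma loc_dom (P : R -> Prop) x : ~ P 1 -> dm x -> loc P x.
Proof. by move=> P1 [a ->]; exists a, 1; rewrite tofrac1 invr1 mulr1. Qed.

Lemma loc_of (P : R -> Prop) (x : K) (r : R) : P 0 -> ~ P r -> dm (x * r%:F) -> loc P x.
Proof.
move=> P0 Pr [c ec]; exists c, r; split => //.
have r0 : r%:F != 0 :> K by rewrite tofrac_eq0; apply/eqP => r0; apply: Pr; rewrite r0.
by rewrite -ec mulfK.
Qed.

Lemma prime0 (P : R -> Prop) : is_prime P -> P 0.
Proof. by case=> [[]]. Qed.

Lemma dir21 (Y : (R -> Prop) -> Prop) : (forall P, Y P -> is_prime P) ->
  essential_rep (fun V => exists P, Y P /\ V = loc P) ->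
  (forall P, cl_c Y P -> Espec P) -> PvMD R.
Proof.
move=> YP [_ ER] Ycl M tM.
have [tIM [M1 _]] := tM.
case: (pselect (exists Q, Y Q)) => [[Q0 YQ0]|nY]; last first.
  move=> x _; left; apply: loc_dom => //; apply/ER => V [P [YP' _]].
  by case: nY; exists P.
have FIP : forall s : seq R, (forall r, r \in s -> M r) -> exists Q, Y Q /\ forall r, r \in s -> Q r.
  move=> s sM; case: tIM => [IM [Z|HM]].
    exists Q0; split => // r /sM /Z ->; exact: prime0 (YP _ YQ0).
  apply: contrapT => nex; apply: M1; apply: frac_inj_set; rewrite tofrac1.
  apply/HM; exists s; split; first exact: gen_subR.
  move=> y Cy; rewrite mul1r; apply/ER => V [Q [YQ ->]].
  have [r rs nQr] : exists2 r, r \in s & ~ Q r.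
    apply: contrapT => nn; apply: nex; exists Q; split => // r rs.
    by apply: contrapT => nQ; apply: nn; exists r.
  apply: (loc_of (prime0 (YP _ YQ)) nQr); apply: Cy; exists r; split => //.
  exact: gen_mem.
pose F0 := fun S : (R -> Prop) -> Prop => exists s : seq R,
  (forall r, r \in s -> M r) /\ forall Q, Y Q -> (forall r, r \in s -> Q r) -> S Q.
have FF : Filter F0.
  split.
  - by exists [::]; split.
  - move=> A B [s [sM sA]] [t [tM' tB]]; exists (s ++ t); split.
      by move=> r; rewrite mem_cat => /orP [/sM|/tM'].
    move=> Q YQ Hr; split; [apply: sA|apply: tB] => // r rs; apply: Hr;
      by rewrite mem_cat rs ?orbT.
  - by move=> A B AB [s [sM sA]]; exists s; split => // Q YQ Hr; apply: AB; apply: sA.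
have PF : ProperFilter F0.
  apply: Build_ProperFilter_ex => S [s [sM sS]].
  by have [Q [YQ HQ]] := FIP s sM; exists Q; apply: sS.
have [G [UG F0G]] := ultraFilterLemma PF.
have PG : ProperFilter G by case: UG.
have GY : G Y by apply: F0G; exists [::]; split.
pose P' := fun f : R => G (fun Q => Q f).
have clo : forall U, c_open U -> U P' -> G U.
  move=> U; elim => {U}.
  - by move=> f nf; case: (in_ultra_setVsetC (fun Q : R -> Prop => Q f) UG) => [/nf|].
  - move=> f nnf; apply: filterS (contrapT nnf) => Q Qf; by move=> /(_ Qf).
  - by move=> _; apply: filterT.
  - by move=> U W _ IU _ IW [UP WP]; apply: filterI; [apply: IU|apply: IW].
  - move=> Fm _ IF [U [FU UP]]; apply: filterS (IF U FU UP) => Q UQ; by exists U.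
have P'prime : is_prime P'.
  split; [split; [|split]|split].
  - by apply: filterS GY => Q /YP /prime0.
  - move=> x y Gx Gy; apply: filterS (filterI GY (filterI Gx Gy)) => Q [/YP [[_ [QD _]] _] [Qx Qy]].
    exact: QD.
  - move=> r x Gx; apply: filterS (filterI GY Gx) => Q [/YP [[_ [_ QM]] _] Qx].
    exact: QM.
  - move=> G1; apply: (filter_not_empty G); apply: filterS (filterI GY G1) => Q [/YP [_ [Q1 _]] ].
    exact: Q1.
  - move=> x y Gxy; have [Gx|Gnx] := in_ultra_setVsetC (fun Q : R -> Prop => Q x) UG.
      by left.
    right; apply: filterS (filterI GY (filterI Gxy Gnx)) => Q [/YP [_ [_ QP]] [/QP [] // ]].
have clP' : cl_c Y P'.
  split => // U cU UP'.
  have GU := clo U cU UP'.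
  have [Q [YQ UQ]] := filter_ex_subproof (filter_not_empty G) (filterI GY GU).
  by exists Q; split => //; split => //; apply: YP.
have [_ vP'] := Ycl _ clP'.
have MP' : forall r, M r -> P' r.
  by move=> r Mr; apply: F0G; exists [:: r]; split => [a|Q _]; [rewrite inE => /eqP ->|apply; rewrite inE].
move=> x x0; have [[a [s [nP's ->]]]|[a [s [nP's ex]]]] := vP' x x0.
  by left; exists a, s; split => // /MP'.
by right; exists a, s; split => // /MP'.
Qed.


Lemma loc_inv (Q : R -> Prop) x : Q 0 -> loc Q x -> exists s, ~ Q s /\ dm (s%:F * x).
Proof.
move=> Q0 [a [s [nQs ->]]]; exists s; split => //; exists a.
have s0 : s%:F != 0 :> K by rewrite tofrac_eq0; apply/eqP => s0; apply: nQs; rewrite s0.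
by rewrite mulrC mulfVK.
Qed.

Lemma c_open_ext (U W : (R -> Prop) -> Prop) : c_open U -> (forall Q, U Q <-> W Q) -> c_open W.
Proof.
move=> cU UW; have -> // : W = U.
by apply: funext => Q; apply: propext; split => /UW.
Qed.

Lemma c_open_list (l : seq R) : c_open (fun Q : R -> Prop => forall r, r \in l -> ~ Dset r Q).
Proof.
elim: l => [|a l IHl].
  by apply: c_open_ext (c_open_full R) _ => Q; split.
apply: c_open_ext (c_open_inter (c_open_V a) IHl) _ => Q; split.
  by move=> [Qa Ql] r; rewrite inE => /orP [/eqP -> //|/Ql].
move=> Hr; split; first by apply: Hr; rewrite mem_head.
by move=> r rl; apply: Hr; rewrite inE rl orbT.
Qed.

Lemma tmax_ideal (M : R -> Prop) : t_maximal M -> is_ideal M.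
Proof. by case=> [[]]. Qed.

Lemma Aideal (x : K) : is_ideal (fun d : R => dm (d%:F * x)).
Proof.
split; [|split].
- by rewrite tofrac0 mul0r; exact: dom0.
- by move=> a b da db; rewrite tofracD mulrDl; exact: domD.
- by move=> r a da; rewrite tofracM -mulrA; apply: domM => //; exact: domF.
Qed.

Lemma ess12 : PvMD R -> essential_rep (fun V : K -> Prop => exists P : R -> Prop, t_maximal P /\ V = loc P).
Proof.
move=> PV; split.
  move=> V [P [tP ->]]; split; first exact: PV.
  by exists P; split => //; exact: tmax_prime.
move=> x; split; last first.
  by move=> dx V [P [[_ [P1 _]] ->]]; apply: loc_dom.
move=> Hx; apply: contrapT => ndx.
pose A := fun d : R => dm (d%:F * x).
have TA : tproper A.
  move=> s sA v1; apply: ndx; rewrite -[x]mul1r; apply: v1; apply: colon_gen => r rs.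
  by rewrite mulrC; apply: sA; apply: gen_mem.
have [M [tM AM]] := tmax_exists (Aideal x) TA.
have [s [nMs ds]] := loc_inv (prime0 (tmax_prime tM)) (Hx _ (ex_intro _ M (conj tM erefl))).
by apply: nMs; apply: AM.
Qed.

Lemma clo12 : PvMD R -> forall P, cl_c (@t_maximal R) P -> Espec P.
Proof.
move=> PV P [Pp Pcl]; split => // x x0.
apply: contrapT => nv.
pose A := fun d : R => dm (d%:F * x).
pose B := fun d : R => dm (d%:F * x^-1).
have AP : forall d, A d -> P d.
  move=> d Ad; apply: contrapT => nPd; apply: nv; left.
  by apply: (loc_of (prime0 Pp) nPd); rewrite mulrC.
have BP : forall d, B d -> P d.
  move=> d Bd; apply: contrapT => nPd; apply: nv; right.
  by apply: (loc_of (prime0 Pp) nPd); rewrite mulrC.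
pose H := fun r : R => exists a b, A a /\ B b /\ r = a + b.
have IH : is_ideal H.
  have [A0 [AD AM]] := Aideal x; have [B0 [BD BM]] := Aideal x^-1.
  split; [|split].
  - by exists 0, 0; rewrite addr0.
  - move=> r1 r2 [a [b [Aa [Bb ->]]]] [a' [b' [Aa' [Bb' ->]]]].
    by exists (a + a'), (b + b'); split; [apply: AD|split; [apply: BD|rewrite addrACA]].
  - move=> r1 r2 [a [b [Aa [Bb ->]]]].
    by exists (r1 * a), (r1 * b); split; [apply: AM|split; [apply: BM|rewrite mulrDr]].
have nTH : ~ tproper H.
  move=> TH; have [M [tM HM]] := tmax_exists IH TH.
  have M0 := prime0 (tmax_prime tM).
  have [Ax|Ax] := PV M tM x x0.
    have [s [nMs ds]] := loc_inv M0 Ax; apply: nMs; apply: HM.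
    by exists s, 0; split => //; split; [rewrite /B tofrac0 mul0r; exact: dom0|rewrite addr0].
  have [s [nMs ds]] := loc_inv M0 Ax; apply: nMs; apply: HM.
  by exists 0, s; split => //; [rewrite /A tofrac0 mul0r; exact: dom0|rewrite add0r].
have [s [sH v1]] : exists s : seq R, (forall a, gen_ideal s a -> H a) /\
    vclos (frac_set (gen_ideal s)) 1.
  apply: contrapT => nex; apply: nTH => s sH v1; apply: nex; by exists s.
have [L [LA Lrep]] : exists L : seq R, (forall l, l \in L -> A l) /\
    forall r, r \in s -> exists a g, [/\ a \in L, g \in L & r%:F = a%:F + g%:F * x].
  have : forall r, r \in s -> H r by move=> r rs; apply: sH; exact: gen_mem.
  elim: (s) => [|r0 s0 IHs] Hs; first by exists [::].
  have [|L [LA Lrep]] := IHs; first by move=> r rs; apply: Hs; rewrite inE rs orbT.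
  have [a [b [Aa [Bb er0]]]] := Hs r0 (mem_head _ _).
  have [g eg] := Bb.
  have Ag : A g by rewrite /A -eg divfK //; exact: domF.
  exists [:: a, g & L]; split.
    by move=> l; rewrite !inE => /orP [/eqP -> //|/orP [/eqP -> //|/LA]].
  move=> r; rewrite inE => /orP [/eqP -> |/Lrep [a' [g' [a'L g'L er]]]].
    exists a, g; split; rewrite ?inE ?eqxx ?orbT //.
    by rewrite er0 tofracD -eg divfK.
  by exists a', g'; split; rewrite // !inE ?a'L ?g'L !orbT.
have [L2 [L2a L2b]] : exists L2 : seq R,
    (forall l, l \in L -> exists e, e \in L2 /\ e%:F = l%:F * x) /\
    (forall e, e \in L2 -> exists l, l \in L /\ e%:F = l%:F * x).
  elim: (L) LA => [|l0 L0 IHL] HL; first by exists [::].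
  have [|L2 [L2a L2b]] := IHL; first by move=> l lL; apply: HL; rewrite inE lL orbT.
  have [e ee] := HL l0 (mem_head _ _).
  exists (e :: L2); split.
    move=> l; rewrite inE => /orP [/eqP -> |/L2a [e' [e'L ee']]].
      by exists e; rewrite mem_head.
    by exists e'; rewrite inE e'L orbT.
  move=> e'; rewrite inE => /orP [/eqP -> |/L2b [l [lL el]]].
    by exists l0; rewrite mem_head.
  by exists l; rewrite inE lL orbT.
have C1 : forall d, A d -> vclos (frac_set (gen_ideal L)) d%:F.
  move=> d Ad w Cw.
  have := v1 (d%:F * w); rewrite mul1r; apply; apply: colon_gen => r rs.
  have [a [g [aL gL ->]]] := Lrep r rs.
  have Ca : dm (w * a%:F) by apply: Cw; exists a; split => //; exact: gen_mem.
  have Cg : dm (w * g%:F) by apply: Cw; exists g; split => //; exact: gen_mem.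
  have -> : d%:F * w * (a%:F + g%:F * x) = d%:F * (w * a%:F) + (d%:F * x) * (w * g%:F) by ring.
  by apply: domD; apply: domM => //; exact: domF.
have C2 : forall e, B e -> vclos (frac_set (gen_ideal L2)) e%:F.
  move=> e [d ed] w Cw.
  have Ad : A d by rewrite /A -ed divfK //; exact: domF.
  have ee : e%:F = d%:F * x by rewrite -ed divfK.
  rewrite ee -mulrA; apply: C1 => //; apply: colon_gen => l lL.
  have [e' [e'L ee']] := L2a l lL.
  have -> : x * w * l%:F = w * (l%:F * x) by ring.
  rewrite -ee'; apply: Cw; exists e'; split => //.
  exact: gen_mem.
have UP : forall r, r \in L ++ L2 -> ~ Dset r P.
  move=> r; rewrite mem_cat => /orP [/LA /AP Pr|/L2b [l [lL el]]]; first by move=> /(_ Pr).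
  move=> /(_ _); apply; apply: BP; exists l; rewrite el mulfK //.
have [Q [tQ [Qp UQ]]] := Pcl _ (c_open_list (L ++ L2)) UP.
have QL : forall r, r \in L ++ L2 -> Q r.
  by move=> r /UQ nn; apply: contrapT.
have Pn1 : ~ P 1 by case: Pp => [_ []].
have [[IQ [Z|HQ]] [Q1 _]] := tQ.
  apply: Pn1; apply: AP; rewrite /A tofrac1 mul1r -[x]mul1r; apply: v1; apply: colon_gen => r rs.
  have [a [g [aL gL ->]]] := Lrep r rs.
  have /Z -> : Q a by apply: QL; rewrite mem_cat aL.
  have /Z -> : Q g by apply: QL; rewrite mem_cat gL.
  by rewrite tofrac0 mul0r addr0 mulr0; exact: dom0.
have AQ : forall d, A d -> Q d.
  move=> d Ad; apply: frac_inj_set; apply/HQ; exists L; split; last exact: C1.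
  by apply: gen_subR => // r rL; apply: QL; rewrite mem_cat rL.
have BQ : forall d, B d -> Q d.
  move=> d Bd; apply: frac_inj_set; apply/HQ; exists L2; split; last exact: C2.
  by apply: gen_subR => // r rL; apply: QL; rewrite mem_cat rL orbT.
have Q0 := prime0 Qp.
have [Ax|Ax] := PV Q tQ x x0.
  by have [s0 [nQs ds]] := loc_inv Q0 Ax; apply: nQs; apply: AQ.
by have [s0 [nQs ds]] := loc_inv Q0 Ax; apply: nQs; apply: BQ.
Qed.

End Aux.

Theorem theorem2p4 (R : idomainType) :
  PvMD R <->
  (essential_domain R /\
   exists Y : (R -> Prop) -> Prop,
     (forall P, Y P -> is_prime P) /\
     essential_rep (fun V => exists P, Y P /\ V = loc P) /\
     (forall P, cl_c Y P -> Espec P)).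
Proof.
split.
  move=> PV; split; first by exists (fun V => exists P, t_maximal P /\ V = loc P); exact: ess12.
  exists (@t_maximal R); split; first exact: tmax_prime.
  by split; [exact: ess12|exact: clo12].
by move=> [_ [Y [YP [ER Ycl]]]]; exact: dir21 ER Ycl.
Qed.
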